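(* Let $A,M\in\mathbb{C}^{n\times n}$ be Hermitian positive definite. Let $V_r=[\bm v_{r,1},\dots,\bm v_{r,n}]$ be an invertible matrix with $AV_r=MV_r\Lambda$, $\Lambda=\mathrm{diag}(\lambda_1,\dots,\lambda_n)$, such that $V_r^*AV_r$ and $V_r^*MV_r$ are diagonal, with $|1-\lambda_1|\ge\cdots\ge|1-\lambda_n|\ge0$. Fix $n_c\in\{1,\dots,n\}$ and let $P_\sharp\in\mathbb{C}^{n\times n_c}$ satisfy $\mathrm{range}(P_\sharp)=\mathrm{span}\{\bm v_{r,1},\dots,\bm v_{r,n_c}\}$. Then for all integers $\nu_1,\nu_2\ge0$, $$P_\sharp\in\operatorname*{argmin}_{P\in\mathbb{C}^{n\times n_c}}\|E_{\rm TG}^{\nu_1,\nu_2}(P,P)\|_A\quad\text{and}\quad P_\sharp\in\operatorname*{argmin}_{P\in\mathbb{C}^{n\times n_c}}\|E_{\rm TG}^{\nu_1,\nu_2}(P,P)\|_M$$ (minima over $P$ with $P^*AP$ invertible), and, if $n_c<n$, $$\|E_{\rm TG}^{\nu_1,\nu_2}(P_\sharp,P_\sharp)\|_A=\|E_{\rm TG}^{\nu_1,\nu_2}(P_\sharp,P_\sharp)\|_M=|1-\lambda_{n_c+1}|^{\nu_1+\nu_2}.$$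
   Context: For $P,R\in\mathbb{C}^{n\times n_c}$ with $R^*AP$ invertible, $\Pi(P,R)=P(R^*AP)^{-1}R^*A$ and $E_{\rm TG}^{\nu_1,\nu_2}(P,R)=(I-M^{-1}A)^{\nu_2}(I-\Pi(P,R))(I-M^{-1}A)^{\nu_1}$. For Hermitian positive definite $S$, $\|x\|_S=(x^*Sx)^{1/2}$ and $\|Z\|_S=\max_{x\ne0}\|Zx\|_S/\|x\|_S$. *)

(* Defs.v *)
(* matrices over C := R[i] (mathcomp-real-closed complex numbers)
   with R : realType (MathComp-Analysis reals), so that operator norms can be
   defined as suprema. *)
From HB Require Import structures.
From mathcomp Require Import all_boot all_order all_algebra.
From mathcomp Require Import complex.
From mathcomp Require Import boolp classical_sets reals.
Set Implicit Arguments. Unset Strict Implicit. Unset Printing Implicit Defensive.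
Import Order.TTheory GRing.Theory Num.Theory.
Local Open Scope ring_scope.
Local Open Scope classical_set_scope.

Section Defs.
Variable R : realType.
Local Notation C := R[i].

Definition ctmx (m n : nat) (A : 'M[C]_(m, n)) : 'M[C]_(n, m) :=
  (map_mx (@conjc R) A)^T.

Definition hermitian (n : nat) (A : 'M[C]_n) : Prop := ctmx A = A.

Definition hpd (n : nat) (A : 'M[C]_n) : Prop :=
  hermitian A /\ forall x : 'cV[C]_n, x != 0 -> 0 < (ctmx x *m A *m x) 0 0.

Definition mxpow (n : nat) (A : 'M[C]_n) (k : nat) : 'M[C]_n :=
  iter k (mulmx A) 1%:M.

Definition Pi (n nc : nat) (A : 'M[C]_n) (P Q : 'M[C]_(n, nc)) : 'M[C]_n :=
  P *m invmx (ctmx Q *m A *m P) *m ctmx Q *m A.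

Definition ETG (n nc : nat) (A M : 'M[C]_n) (nu1 nu2 : nat)
    (P Q : 'M[C]_(n, nc)) : 'M[C]_n :=
  mxpow (1%:M - invmx M *m A) nu2 *m (1%:M - Pi A P Q)
    *m mxpow (1%:M - invmx M *m A) nu1.

Definition vnorm (n : nat) (S : 'M[C]_n) (x : 'cV[C]_n) : R :=
  Num.sqrt (complex.Re ((ctmx x *m S *m x) 0 0)).

Definition opnorm (n : nat) (S Z : 'M[C]_n) : R :=
  reals.sup [set vnorm S (Z *m x) / vnorm S x | x in [set x : 'cV[C]_n | x != 0]].

End Defs.

(* Main.v *)
Require Import Defs.
From HB Require Import structures.
From mathcomp Require Import all_boot all_order all_algebra.
From mathcomp Require Import complex.
From mathcomp Require Import boolp classical_sets reals.
From mathcomp Require Import ring.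
Import Order.TTheory GRing.Theory Num.Theory.
Local Open Scope ring_scope.
Local Open Scope complex_scope.
Set Implicit Arguments. Unset Strict Implicit. Unset Printing Implicit Defensive.


Section Aux.
Variable R : realType.
Local Notation C := R[i].

Lemma ctmxE m n (X : 'M[C]_(m,n)) i j : ctmx X i j = (X j i)^*%C.
Proof. by rewrite !mxE. Qed.

Lemma ctmx_mul m n p (X : 'M[C]_(m,n)) (Y : 'M[C]_(n,p)) :
  ctmx (X *m Y) = ctmx Y *m ctmx X.
Proof. by rewrite /ctmx map_mxM trmx_mul. Qed.

Lemma ctmxK m n (X : 'M[C]_(m,n)) : ctmx (ctmx X) = X.
Proof. by apply/matrixP => i j; rewrite !ctmxE conjcK. Qed.

Lemma ctmx0 m n : ctmx (0 : 'M[C]_(m,n)) = 0.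
Proof. by apply/matrixP => i j; rewrite ctmxE !mxE conjc0. Qed.

Lemma ctmx_eq0 m n (X : 'M[C]_(m,n)) : (ctmx X == 0) = (X == 0).
Proof.
apply/eqP/eqP => [h|->]; last exact: ctmx0.
by rewrite -(ctmxK X) h ctmx0.
Qed.

Definition qf n (S : 'M[C]_n) (x : 'cV[C]_n) : C := (ctmx x *m S *m x) 0 0.

Lemma hpd_qf_gt0 n (S : 'M[C]_n) x : hpd S -> x != 0 -> 0 < qf S x.
Proof. by case=> _ h; apply: h. Qed.

Lemma hpd_unit n (S : 'M[C]_n) : hpd S -> S \in unitmx.
Proof.
move=> hS; rewrite unitmxE unitfE; apply/negP => /det0P [v v0 vS].
have x0 : ctmx v != 0 by rewrite ctmx_eq0.
have := hpd_qf_gt0 hS x0.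
have -> : qf S (ctmx v) = 0.
  rewrite /qf -mulmxA.
  have -> : S *m ctmx v = 0.
    by case: hS => /= hh _; rewrite -{1}hh -ctmx_mul vS ctmx0.
  by rewrite mulmx0 mxE.
by rewrite ltxx.
Qed.

Lemma qf_Vr n (S Vr : 'M[C]_n) (d : 'rV[C]_n) (c : 'cV[C]_n) :
  ctmx Vr *m S *m Vr = diag_mx d ->
  qf S (Vr *m c) = \sum_i d 0 i * `|c i 0| ^+ 2.
Proof.
move=> hD; rewrite /qf ctmx_mul.
have -> : ctmx c *m ctmx Vr *m S *m (Vr *m c) = ctmx c *m (ctmx Vr *m S *m Vr) *m c.
  by rewrite !mulmxA.
rewrite hD mul_mx_diag mxE.
apply: eq_bigr => j _; rewrite !mxE normCKC.
by rewrite [_ * d 0 j]mulrC -mulrA.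
Qed.


Lemma qf0 n (S : 'M[C]_n) : qf S 0 = 0.
Proof. by rewrite /qf mulmx0 mxE. Qed.

Lemma qf_ge0 n (S : 'M[C]_n) x : hpd S -> 0 <= qf S x.
Proof.
move=> hS; have [->|x0] := eqVneq x 0; first by rewrite qf0.
exact/ltW/hpd_qf_gt0.
Qed.

Lemma real_of_le (a w : C) : 0 <= w -> a <= w -> a = (complex.Re a)%:C /\ complex.Re a <= complex.Re w.
Proof.
move=> w0; rewrite lecE => /andP [/eqP hi hr]; split => //.
move: w0; rewrite lecE => /andP [/eqP w0 _].
by case: a hi hr => a b /= hi _; rewrite -hi w0.
Qed.

Lemma real_of_ge (a w : C) : 0 <= w -> w <= a -> a = (complex.Re a)%:C /\ complex.Re w <= complex.Re a.
Proof.
move=> w0; rewrite lecE => /andP [/eqP hi hr]; split => //.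
move: w0; rewrite lecE => /andP [/eqP w0 _].
by case: a hi hr => a b /= hi _; rewrite hi w0.
Qed.

Lemma ge0_real (w : C) : 0 <= w -> w = (complex.Re w)%:C /\ 0 <= complex.Re w.
Proof.
move=> w0; have [h1 _] := real_of_ge (lexx 0) w0; split => //.
by move: w0; rewrite {1}h1 ler0c.
Qed.

Lemma ratio_le n (S Z : 'M[C]_n) x (r : R) : hpd S -> x != 0 -> 0 <= r ->
  qf S (Z *m x) <= (r%:C) ^+ 2 * qf S x -> vnorm S (Z *m x) / vnorm S x <= r.
Proof.
move=> hS x0 r0 h.
have b0 := hpd_qf_gt0 hS x0.
have [eb rb] := ge0_real (ltW b0).
have rb0 : 0 < complex.Re (qf S x) by move: b0; rewrite eb ltcR.
have w0 : 0 <= (r%:C) ^+ 2 * qf S x by rewrite mulr_ge0 ?exprn_ge0 ?ler0c // ltW.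
have [ea ra] := real_of_le w0 h.
rewrite /vnorm -/(qf S (Z *m x)) -/(qf S x).
rewrite ler_pdivrMr ?sqrtr_gt0 //.
have -> : r * Num.sqrt (complex.Re (qf S x)) = Num.sqrt (r ^+ 2 * complex.Re (qf S x)).
  by rewrite sqrtrM ?exprn_ge0 // sqrtr_sqr ger0_norm.
rewrite ler_sqrt; last by rewrite mulr_ge0 ?exprn_ge0.
move: ra; rewrite eb -rmorphXn -rmorphM /=.
done.
Qed.

Lemma ratio_ge n (S Z : 'M[C]_n) x (r : R) : hpd S -> x != 0 -> 0 <= r ->
  (r%:C) ^+ 2 * qf S x <= qf S (Z *m x) -> r <= vnorm S (Z *m x) / vnorm S x.
Proof.
move=> hS x0 r0 h.
have b0 := hpd_qf_gt0 hS x0.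
have [eb rb] := ge0_real (ltW b0).
have rb0 : 0 < complex.Re (qf S x) by move: b0; rewrite eb ltcR.
have w0 : 0 <= (r%:C) ^+ 2 * qf S x by rewrite mulr_ge0 ?exprn_ge0 ?ler0c // ltW.
have [ea ra] := real_of_ge w0 h.
rewrite /vnorm -/(qf S (Z *m x)) -/(qf S x).
rewrite ler_pdivlMr ?sqrtr_gt0 //.
have -> : r * Num.sqrt (complex.Re (qf S x)) = Num.sqrt (r ^+ 2 * complex.Re (qf S x)).
  by rewrite sqrtrM ?exprn_ge0 // sqrtr_sqr ger0_norm.
rewrite ler_sqrt; last by apply: le_trans ra; rewrite eb -rmorphXn -rmorphM /= mulr_ge0 ?exprn_ge0.
move: ra; rewrite eb -rmorphXn -rmorphM /=.
done.
Qed.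

Lemma nonzero_vec n : (0 < n)%N -> exists x : 'cV[C]_n, x != 0.
Proof.
move=> n0; exists (const_mx 1); apply/eqP => /matrixP /(_ (Ordinal n0) 0).
by rewrite !mxE; apply/eqP; rewrite oner_eq0.
Qed.

Lemma opnorm_le n (S Z : 'M[C]_n) (r : R) : hpd S -> (0 < n)%N -> 0 <= r ->
  (forall x, x != 0 -> qf S (Z *m x) <= (r%:C) ^+ 2 * qf S x) -> opnorm S Z <= r.
Proof.
move=> hS n0 r0 h; apply: ge_sup.
  have [x x0] := nonzero_vec n0.
  by exists (vnorm S (Z *m x) / vnorm S x); exists x.
by move=> y [x /= x0 <-]; apply: ratio_le => //; apply: h.
Qed.

Definition bounded_op n (S Z : 'M[C]_n) :=
  exists K : R, 0 <= K /\ forall x, x != 0 -> qf S (Z *m x) <= (K%:C) ^+ 2 * qf S x.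

Lemma opnorm_ge n (S Z : 'M[C]_n) (r : R) x : hpd S -> bounded_op S Z -> 0 <= r ->
  x != 0 -> (r%:C) ^+ 2 * qf S x <= qf S (Z *m x) -> r <= opnorm S Z.
Proof.
move=> hS [K [K0 hK]] r0 x0 h.
have hs : has_sup [set vnorm S (Z *m x) / vnorm S x | x in [set x : 'cV[C]_n | x != 0]].
  split; first by exists (vnorm S (Z *m x) / vnorm S x); exists x.
  exists K => y [z /= z0 <-]; apply: ratio_le => //; exact: hK.
apply: le_trans (ratio_ge hS x0 r0 h) _.
by apply: sup_upper_bound => //; exists x.
Qed.


Lemma lerX2 (x y : C) k : 0 <= x -> x <= y -> x ^+ k <= y ^+ k.
Proof.
move=> x0 xy; apply: lerXn2r => //; rewrite qualifE //.
exact: le_trans xy.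
Qed.

Lemma le_sum_term (I : finType) (F : I -> C) i :
  (forall j, 0 <= F j) -> F i <= \sum_j F j.
Proof. by move=> h; rewrite (bigD1 i) //= lerDl sumr_ge0. Qed.

Lemma sum_sqr_le n (u : 'I_n -> C) : (forall i, 0 <= u i) ->
  (\sum_i u i) ^+ 2 <= n%:R * \sum_i u i ^+ 2.
Proof.
move=> u0.
have key : forall i j, u i * u j *+ 2 <= u i ^+ 2 + u j ^+ 2.
  move=> i j; rewrite -subr_ge0.
  have -> : u i ^+ 2 + u j ^+ 2 - u i * u j *+ 2 = (u i - u j) ^+ 2.
    by rewrite sqrrB; ring.
  by rewrite -real_normK ?exprn_ge0 // realB ?ger0_real.
rewrite -(ler_pMn2r (n := 2)) //.
have -> : (\sum_i u i) ^+ 2 *+ 2 = \sum_i \sum_j u i * u j *+ 2.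
  rewrite expr2 mulr_suml -sumrMnl; apply: eq_bigr => i _.
  by rewrite mulr_sumr sumrMnl.
apply: le_trans (_ : \sum_i \sum_j (u i ^+ 2 + u j ^+ 2) <= _).
  by apply: ler_sum => i _; apply: ler_sum => j _; apply: key.
rewrite le_eqVlt; apply/orP; left; apply/eqP.
under eq_bigr do rewrite big_split /= sumr_const card_ord.
rewrite big_split /= sumr_const card_ord sumrMnl.
set s := \sum_i _.
by rewrite mulr_natl mulr2n.
Qed.

End Aux.

Section B.
Variable R : realType.
Local Notation C := R[i].

Lemma bounded_all n (S Vr Z : 'M[C]_n) (d : 'rV[C]_n) :
  hpd S -> Vr \in unitmx -> ctmx Vr *m S *m Vr = diag_mx d ->
  (forall i, 0 < d 0 i) -> bounded_op S Z.
Proof.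
move=> hS uV hD dpos.
pose B := invmx Vr *m Z *m Vr.
pose L := \sum_i \sum_j `|B i j| ^+ 2 / d 0 j.
pose K2 := (\sum_i d 0 i) * (n%:R * L).
have L0 : 0 <= L.
  by apply: sumr_ge0 => i _; apply: sumr_ge0 => j _; rewrite divr_ge0 ?exprn_ge0 // ltW.
have K20 : 0 <= K2.
  apply: mulr_ge0; last by rewrite mulr_ge0 ?ler0n.
  by apply: sumr_ge0 => i _; apply: ltW.
have [eK K0] := ge0_real K20.
exists (Num.sqrt (complex.Re K2)); split; first exact: sqrtr_ge0.
move=> x x0.
rewrite -rmorphXn /= sqr_sqrtr // -eK.
pose c := invmx Vr *m x.
have xE : x = Vr *m c by rewrite /c mulmxA mulmxV // mul1mx.
have ZxE : Z *m x = Vr *m (B *m c).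
  by rewrite /B xE !mulmxA mulmxV // mul1mx -!mulmxA mulKVmx.
rewrite ZxE (qf_Vr _ hD) xE (qf_Vr _ hD).
set t := \sum_i d 0 i * `|c i 0| ^+ 2.
have t0 : 0 <= t by apply: sumr_ge0 => i _; rewrite mulr_ge0 ?exprn_ge0 // ltW.
have hi : forall i, `|(B *m c) i 0| ^+ 2 <= n%:R * (L * t).
  move=> i; rewrite mxE.
  apply: le_trans (_ : (\sum_j `|B i j| * `|c j 0|) ^+ 2 <= _).
    apply: lerX2 => //; apply: le_trans (ler_norm_sum _ _ _) _.
    by apply: ler_sum => j _; rewrite normrM.
  apply: le_trans (sum_sqr_le _) _; first by move=> j; rewrite mulr_ge0.
  rewrite ler_wpM2l ?ler0n //.
  apply: le_trans (_ : \sum_j L * (d 0 j * `|c j 0| ^+ 2) <= _); last first.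
    by rewrite mulr_sumr.
  apply: ler_sum => j _.
  have dj0 : d 0 j != 0 by rewrite gt_eqF.
  have -> : (`|B i j| * `|c j 0|) ^+ 2 = `|B i j| ^+ 2 / d 0 j * (d 0 j * `|c j 0| ^+ 2).
    by rewrite exprMn [RHS]mulrA divfK.
  apply: ler_wpM2r; first by rewrite mulr_ge0 ?exprn_ge0 // ltW.
  apply: le_trans (_ : \sum_j `|B i j| ^+ 2 / d 0 j <= _).
    rewrite [leRHS](bigD1 j) //= lerDl sumr_ge0 // => k _.
    by rewrite divr_ge0 ?exprn_ge0 // ltW.
  rewrite /L [leRHS](bigD1 i) //= lerDl sumr_ge0 // => k _.
  by apply: sumr_ge0 => j' _; rewrite divr_ge0 ?exprn_ge0 // ltW.
rewrite /K2 -!mulrA mulr_suml.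
apply: ler_sum => i _.
by rewrite ler_wpM2l // ltW.
Qed.

End B.

Section D.
Variable R : realType.
Local Notation C := R[i].

Lemma diag_of n (D : 'M[C]_n) : is_diag_mx D -> D = diag_mx (\row_i D i i).
Proof.
move=> /is_diag_mxP h; apply/matrixP => i j; rewrite !mxE.
have [->|ij] := eqVneq i j; first by rewrite mulr1n.
by rewrite mulr0n h.
Qed.

Lemma one_sub_diag n (d : 'rV[C]_n) : 1%:M - diag_mx d = diag_mx (\row_i (1 - d 0 i)).
Proof.
apply/matrixP => i j; rewrite !mxE.
by have [->|ij] := eqVneq i j; rewrite ?mulr1n ?mulr0n ?subr0.
Qed.

Lemma d_pos n (S Vr : 'M[C]_n) (d : 'rV[C]_n) :
  hpd S -> Vr \in unitmx -> ctmx Vr *m S *m Vr = diag_mx d -> forall i, 0 < d 0 i.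
Proof.
move=> hS uV hD i.
pose c : 'cV[C]_n := delta_mx i 0.
have c0 : c != 0.
  apply/eqP => /matrixP /(_ i 0); rewrite !mxE !eqxx /=.
  by move/eqP; rewrite oner_eq0.
have x0 : Vr *m c != 0.
  apply: contra c0 => /eqP h; apply/eqP.
  by rewrite -(mulKmx uV c) h mulmx0.
have := hpd_qf_gt0 hS x0; rewrite (qf_Vr _ hD) (bigD1 i) //= big1.
  by rewrite addr0 !mxE !eqxx /= normr1 expr1n mulr1.
by move=> j /negPf ji; rewrite !mxE ji /= normr0 expr0n mulr0.
Qed.

Lemma mxpowE n (S : 'M[C]_n) k : mxpow S k.+1 = S *m mxpow S k.
Proof. by []. Qed.

Lemma pow_Vr n (S Vr : 'M[C]_n) (mu : 'rV[C]_n) :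
  S *m Vr = Vr *m diag_mx mu ->
  forall k, mxpow S k *m Vr = Vr *m diag_mx (\row_i (mu 0 i ^+ k)).
Proof.
move=> h; elim=> [|k IH].
  rewrite /mxpow /= mul1mx; apply/esym.
  have -> : diag_mx (\row_i (mu 0 i ^+ 0)) = 1%:M.
    by apply/matrixP => i j; rewrite !mxE expr0.
  by rewrite mulmx1.
rewrite mxpowE -mulmxA IH mulmxA h -mulmxA mulmx_diag.
congr (_ *m diag_mx _); apply/matrixP => i j; rewrite !mxE.
by rewrite exprS.
Qed.

Lemma S_Vr n (A M Vr : 'M[C]_n) (lam : 'rV[C]_n) :
  M \in unitmx -> A *m Vr = M *m Vr *m diag_mx lam ->
  (1%:M - invmx M *m A) *m Vr = Vr *m diag_mx (\row_i (1 - lam 0 i)).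
Proof.
move=> uM h.
rewrite mulmxBl mul1mx -mulmxA h -!mulmxA mulKmx // -one_sub_diag.
by rewrite mulmxBr mulmx1.
Qed.

End D.

Section J.
Variable R : realType.
Local Notation C := R[i].

Definition Jm n nc : 'M[C]_(n, nc) := \matrix_(i, j) ((i : nat) == j)%:R.

Lemma mulJE n nc (Hnc : (nc <= n)%N) m (W : 'M[C]_(m, n)) a k :
  (W *m Jm n nc) a k = W a (widen_ord Hnc k).
Proof.
rewrite mxE (bigD1 (widen_ord Hnc k)) //= big1 ?addr0.
  by rewrite mxE eqxx mulr1.
move=> j jk; rewrite mxE.
have -> : ((j : nat) == k) = false.
  by apply/negP => /eqP h; move/eqP: jk; apply; apply/val_inj.
by rewrite mulr0.
Qed.

Lemma JtE n nc (Hnc : (nc <= n)%N) p (D : 'M[C]_(n, p)) k j :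
  ((Jm n nc)^T *m D) k j = D (widen_ord Hnc k) j.
Proof.
rewrite mxE (bigD1 (widen_ord Hnc k)) //= big1 ?addr0.
  by rewrite !mxE eqxx mul1r.
move=> i ik; rewrite !mxE.
have -> : ((i : nat) == k) = false.
  by apply/negP => /eqP h; move/eqP: ik; apply; apply/val_inj.
by rewrite mul0r.
Qed.

Lemma ctJ n nc : ctmx (Jm n nc) = (Jm n nc)^T.
Proof. by apply/matrixP => i j; rewrite !mxE conjc_nat. Qed.

Lemma JtJ n nc (Hnc : (nc <= n)%N) : (Jm n nc)^T *m Jm n nc = 1%:M.
Proof.
apply/matrixP => a b; rewrite (JtE Hnc) !mxE /=.
by [].
Qed.

End J.
Arguments JtJ {R n nc}.
Arguments ctJ {R n nc}.

Section Pi.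
Variable R : realType.
Local Notation C := R[i].

Lemma Pi_sharp n nc (Hnc : (nc <= n)%N) (A Vr : 'M[C]_n) (dA : 'rV[C]_n)
    (Psh : 'M[C]_(n, nc)) :
  hpd A -> Vr \in unitmx -> ctmx Vr *m A *m Vr = diag_mx dA ->
  (Psh^T == \matrix_(k < nc, l < n) Vr l (widen_ord Hnc k))%MS ->
  (ctmx Psh *m A *m Psh) \in unitmx /\
  Pi A Psh Psh *m Vr = Vr *m diag_mx (\row_i ((i < nc)%N%:R)).
Proof.
move=> hA uV hD /andP [h1 h2].
set VJ := Vr *m Jm R n nc.
have TE : \matrix_(k < nc, l < n) Vr l (widen_ord Hnc k) = VJ^T.
  by apply/matrixP => k l; rewrite [LHS]mxE [RHS]mxE /VJ (mulJE Hnc).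
rewrite TE in h1 h2.
have [X hX] := submxP h2.
have [Y hY] := submxP h1.
have eVJ : VJ = Psh *m X^T by rewrite -[VJ]trmxK hX trmx_mul trmxK.
have ePsh : Psh = VJ *m Y^T by rewrite -[Psh]trmxK hY trmx_mul trmxK.
have YX : Y^T *m X^T = 1%:M.
  have e : VJ *m 1%:M = VJ *m (Y^T *m X^T) by rewrite mulmx1 mulmxA -ePsh -eVJ.
  move: e; rewrite /VJ -!mulmxA => /(congr1 (mulmx (invmx Vr))); rewrite !mulKmx //.
  move=> /(congr1 (mulmx (Jm R n nc)^T)); rewrite !mulmxA (JtJ Hnc) !mul1mx.
  by move=> <-.
have [uY _] := mulmx1_unit YX.
have hG : hpd (ctmx Psh *m A *m Psh).
  split.
    case: hA => hA _; rewrite /Defs.hermitian !ctmx_mul ctmxK.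
    by rewrite hA mulmxA.
  move=> y y0.
  have -> : (ctmx y *m (ctmx Psh *m A *m Psh) *m y) 0 0 = qf A (Psh *m y).
    by rewrite /qf ctmx_mul !mulmxA.
  apply: hpd_qf_gt0 => //; apply: contra y0 => /eqP h.
  move: h; rewrite ePsh /VJ -!mulmxA => /(congr1 (mulmx (invmx Vr))).
  rewrite mulKmx // mulmx0 => /(congr1 (mulmx (Jm R n nc)^T)).
  rewrite mulmxA (JtJ Hnc) mul1mx mulmx0 => /(congr1 (mulmx (invmx Y^T))).
  by rewrite mulKmx // mulmx0 => ->.
have uG := hpd_unit hG.
split => //.
set G := ctmx Psh *m A *m Psh.
have WE : ctmx Psh *m A *m Vr = ctmx Y^T *m ((Jm R n nc)^T *m diag_mx dA).
  by rewrite {1}ePsh /VJ !ctmx_mul ctJ -hD !mulmxA.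
have W0 : forall m (i : 'I_n), (nc <= i)%N -> (ctmx Psh *m A *m Vr) m i = 0.
  move=> m i hi; rewrite WE mxE big1 // => k _.
  rewrite (JtE Hnc) [diag_mx _ _ _]mxE.
  have -> : (widen_ord Hnc k == i) = false.
    apply/negP => /eqP ki; move: hi; rewrite -ki /=.
    by rewrite leqNgt ltn_ord.
  by rewrite mulr0n mulr0.
have PiVr : Pi A Psh Psh *m Vr = Psh *m invmx G *m (ctmx Psh *m A *m Vr).
  by rewrite /Pi /G !mulmxA.
have PiPsh : Pi A Psh Psh *m Psh = Psh.
  by rewrite /Pi -!mulmxA [ctmx Psh *m (A *m Psh)]mulmxA -/G mulVmx // mulmx1.
have PiVJ : Pi A Psh Psh *m VJ = VJ by rewrite {1}eVJ mulmxA PiPsh -eVJ.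
apply/matrixP => a i; rewrite mul_mx_diag [RHS]mxE [_ 0 i]mxE.
case: (ltnP i nc) => hi.
  have wi : widen_ord Hnc (Ordinal hi) = i by apply/val_inj.
  rewrite mulr1 -{1}wi -(mulJE Hnc) -mulmxA PiVJ /VJ (mulJE Hnc) wi.
  by [].
rewrite mulr0 PiVr mxE big1 // => m _.
by rewrite W0 // mulr0.
Qed.

End Pi.

Section LB.
Variable R : realType.
Local Notation C := R[i].

Lemma ker_exists m (K : 'M[C]_(m, m.+1)) : exists c : 'cV_(m.+1), c != 0 /\ K *m c = 0.
Proof.
have : kermx K^T != 0.
  by rewrite -mxrank_eq0 mxrank_ker subn_eq0 -ltnNge ltnS rank_leq_col.
case/rowV0Pn => v /sub_kermxP vK v0; exists v^T; split.
  by apply: contra v0 => /eqP h; rewrite -(trmxK v) h trmx0.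
by rewrite -[K]trmxK -trmx_mul vK trmx0.
Qed.

Lemma ub_diag n (S Vr Z : 'M[C]_n) (d f : 'rV[C]_n) (r : C) :
  Vr \in unitmx -> ctmx Vr *m S *m Vr = diag_mx d -> (forall i, 0 < d 0 i) ->
  Z *m Vr = Vr *m diag_mx f -> 0 <= r -> (forall i, `|f 0 i| <= r) ->
  forall x, qf S (Z *m x) <= r ^+ 2 * qf S x.
Proof.
move=> uV hD dpos hZ r0 hf x.
pose c := invmx Vr *m x.
have xE : x = Vr *m c by rewrite /c mulmxA mulmxV // mul1mx.
rewrite xE mulmxA hZ -mulmxA !(qf_Vr _ hD) mulr_sumr.
apply: ler_sum => i _.
rewrite mul_diag_mx mxE normrM exprMn.
rewrite [leLHS]mulrCA; apply: ler_wpM2r; first by rewrite mulr_ge0 ?exprn_ge0 // ltW.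
exact: lerX2.
Qed.

End LB.

Section LB2.
Variable R : realType.
Local Notation C := R[i].

Lemma lb_exists n nc (Hlt : (nc < n)%N) (A M Vr S' : 'M[C]_n) (mu d : 'rV[C]_n)
    (P : 'M[C]_(n, nc)) nu1 nu2 :
  Vr \in unitmx ->
  (forall k, mxpow (1%:M - invmx M *m A) k *m Vr = Vr *m diag_mx (\row_i (mu 0 i ^+ k))) ->
  (forall i j : 'I_n, (i <= j)%N -> `|mu 0 j| <= `|mu 0 i|) ->
  ctmx Vr *m S' *m Vr = diag_mx d -> (forall i, 0 < d 0 i) ->
  exists x, x != 0 /\
    (`|mu 0 (Ordinal Hlt)| ^+ (nu1 + nu2)) ^+ 2 * qf S' x
      <= qf S' (ETG A M nu1 nu2 P P *m x).
Proof.
move=> uV hpow hord hD dpos.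
set S := 1%:M - invmx M *m A.
pose J := Jm R n nc.+1.
pose K := ctmx P *m A *m (Vr *m diag_mx (\row_i (mu 0 i ^+ nu1)) *m J).
have [c' [c'0 Kc']] := ker_exists K.
pose c := J *m c'.
have cE : c = J *m c' by [].
have cout : forall i : 'I_n, (nc < i)%N -> c i 0 = 0.
  move=> i hi; rewrite mxE big1 // => j _; rewrite mxE.
  have -> : ((i : nat) == j) = false.
    by apply/negP => /eqP ij; move: (ltn_ord j); rewrite -ij ltnS leqNgt hi.
  by rewrite mul0r.
have c0 : c != 0.
  apply: contra c'0 => /eqP h; apply/eqP.
  by rewrite -(mul1mx c') -(JtJ Hlt) -mulmxA -/J -/c h mulmx0.
clearbody c.
pose x := Vr *m c.
have x0 : x != 0.
  apply: contra c0 => /eqP h; apply/eqP.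
  by rewrite -(mulKmx uV c) -/x h mulmx0.
exists x; split => //.
have yE : mxpow S nu1 *m x = Vr *m diag_mx (\row_i (mu 0 i ^+ nu1)) *m c.
  by rewrite /x mulmxA hpow.
have Py : ctmx P *m A *m (mxpow S nu1 *m x) = 0.
  rewrite yE.
  have -> : ctmx P *m A *m (Vr *m diag_mx (\row_i (mu 0 i ^+ nu1)) *m c) = K *m c'.
    by rewrite /K cE !mulmxA.
  by rewrite Kc'.
have Piy : Pi A P P *m (mxpow S nu1 *m x) = 0.
  rewrite /Pi -!mulmxA.
  move: Py; rewrite -!mulmxA => ->.
  by rewrite !mulmx0.
have Ex : ETG A M nu1 nu2 P P *m x
    = Vr *m (diag_mx (\row_i (mu 0 i ^+ nu2)) *m (diag_mx (\row_i (mu 0 i ^+ nu1)) *m c)).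
  rewrite /ETG -/S -!mulmxA mulmxBl mul1mx Piy subr0.
  by rewrite yE !mulmxA hpow.
rewrite Ex !(qf_Vr _ hD) mulr_sumr.
apply: ler_sum => i _.
rewrite !mul_diag_mx !mxE.
case: (ltnP nc i) => hi.
  by rewrite cout // !mulr0 normr0 expr0n /= !mulr0.
have hmu : `|mu 0 (Ordinal Hlt)| <= `|mu 0 i| by apply: hord.
have -> : d 0 i * `|mu 0 i ^+ nu2 * (mu 0 i ^+ nu1 * c i 0)| ^+ 2
    = (`|mu 0 i| ^+ (nu1 + nu2)) ^+ 2 * (d 0 i * `|c i 0| ^+ 2).
  rewrite !normrM !normrX exprD.
  set a := `|mu 0 i|; set b := `|c i 0|; set e := d 0 i.
  ring.
apply: ler_wpM2r; first by rewrite mulr_ge0 ?exprn_ge0 // ltW.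
by apply: lerX2; [exact: exprn_ge0 | apply: lerX2].
Qed.

End LB2.

Unset Implicit Arguments.
Theorem corollary3p6 (R : realType) (n nc : nat)
    (A M Vr : 'M[R[i]]_n) (lam : 'rV[R[i]]_n)
    (Hnc0 : (0 < nc)%N) (Hnc : (nc <= n)%N) (Psh : 'M[R[i]]_(n, nc)) :
  hpd A -> hpd M ->
  Vr \in unitmx ->
  A *m Vr = M *m Vr *m diag_mx lam ->
  is_diag_mx (ctmx Vr *m A *m Vr) ->
  is_diag_mx (ctmx Vr *m M *m Vr) ->
  (forall i j : 'I_n, (i <= j)%N -> `|1 - lam 0 j| <= `|1 - lam 0 i|) ->
  (Psh^T == \matrix_(k < nc, l < n) Vr l (widen_ord Hnc k))%MS ->
  forall nu1 nu2 : nat,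
    [/\ (ctmx Psh *m A *m Psh) \in unitmx,
        (forall P : 'M[R[i]]_(n, nc), (ctmx P *m A *m P) \in unitmx ->
           opnorm A (ETG A M nu1 nu2 Psh Psh) <= opnorm A (ETG A M nu1 nu2 P P)),
        (forall P : 'M[R[i]]_(n, nc), (ctmx P *m A *m P) \in unitmx ->
           opnorm M (ETG A M nu1 nu2 Psh Psh) <= opnorm M (ETG A M nu1 nu2 P P))
      & forall Hlt : (nc < n)%N,
          (opnorm A (ETG A M nu1 nu2 Psh Psh))%:C
            = `|1 - lam 0 (Ordinal Hlt)| ^+ (nu1 + nu2)
          /\ (opnorm M (ETG A M nu1 nu2 Psh Psh))%:C
            = `|1 - lam 0 (Ordinal Hlt)| ^+ (nu1 + nu2)].
Proof.
move=> hA hM uV hAV hdA hdM hord hP nu1 nu2.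
have n0 : (0 < n)%N := leq_trans Hnc0 Hnc.
have hDA := diag_of hdA; have hDM := diag_of hdM.
have dApos := d_pos hA uV hDA; have dMpos := d_pos hM uV hDM.
have uM := hpd_unit hM.
have hS := S_Vr uM hAV.
set mu := \row_i (1 - lam 0 i) in hS.
have hpow := pow_Vr hS.
have [uG hPi] := Pi_sharp hA uV hDA hP.
have hord' : forall i j : 'I_n, (i <= j)%N -> `|mu 0 j| <= `|mu 0 i|.
  by move=> i j h; rewrite !mxE; apply: hord.
set f := \row_i (mu 0 i ^+ nu2 * (1 - (i < nc)%N%:R) * mu 0 i ^+ nu1).
have hE : ETG A M nu1 nu2 Psh Psh *m Vr = Vr *m diag_mx f.
  have h1 : (1%:M - Pi A Psh Psh) *m Vr = Vr *m diag_mx (\row_i (1 - (i < nc)%N%:R)).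
    rewrite mulmxBl mul1mx hPi -{1}(mulmx1 Vr) -mulmxBr one_sub_diag.
    by congr (_ *m diag_mx _); apply/matrixP => a i; rewrite !mxE.
  rewrite /ETG -mulmxA hpow mulmxA -(mulmxA (mxpow _ nu2)) h1 mulmxA hpow.
  rewrite -!mulmxA !mulmx_diag; congr (_ *m diag_mx _).
  by apply/matrixP => a i; rewrite !mxE mulrA.
have key : forall (S' : 'M[R[i]]_n) (d : 'rV[R[i]]_n), hpd S' ->
    ctmx Vr *m S' *m Vr = diag_mx d -> (forall i, 0 < d 0 i) ->
    (forall P : 'M[R[i]]_(n, nc),
       opnorm S' (ETG A M nu1 nu2 Psh Psh) <= opnorm S' (ETG A M nu1 nu2 P P)) /\
    (forall Hlt : (nc < n)%N, (opnorm S' (ETG A M nu1 nu2 Psh Psh))%:C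
                            = `|mu 0 (Ordinal Hlt)| ^+ (nu1 + nu2)).
  move=> S' d hS' hD dpos.
  have [Hlt|Hge] : (nc < n)%N \/ (n <= nc)%N by case: (leqP n nc) => h; [right|left].
    set rC := `|mu 0 (Ordinal Hlt)| ^+ (nu1 + nu2).
    have rC0 : 0 <= rC by rewrite exprn_ge0.
    have [erC r0] := ge0_real rC0.
    set r := complex.Re rC in erC r0.
    have hf : forall i, `|f 0 i| <= rC.
      move=> i; rewrite mxE; case: (ltnP i nc) => hi.
        by rewrite subrr mulr0 mul0r normr0.
      rewrite mulr0n subr0 mulr1 normrM !normrX -exprD addnC.
      by apply: lerX2 => //; apply: hord'.
    have ub : forall x, qf S' (ETG A M nu1 nu2 Psh Psh *m x) <= (r%:C) ^+ 2 * qf S' x.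
      by rewrite -erC; exact: ub_diag uV hD dpos hE rC0 hf.
    have le1 : opnorm S' (ETG A M nu1 nu2 Psh Psh) <= r.
      exact: opnorm_le hS' n0 r0 (fun x _ => ub x).
    have ge : forall P : 'M[R[i]]_(n, nc), r <= opnorm S' (ETG A M nu1 nu2 P P).
      move=> P; have [x [x0 hx]] := lb_exists Hlt P nu1 nu2 uV hpow hord' hD dpos.
      apply: (opnorm_ge hS' (bounded_all _ hS' uV hD dpos) r0 x0).
      by rewrite -erC.

    split; first by move=> P; exact: le_trans le1 (ge P).
    move=> Hlt'.
    have -> : Ordinal Hlt' = Ordinal Hlt by apply: val_inj.
    rewrite -/rC erC; congr (_%:C); apply/eqP; rewrite eq_le le1 ge.
    done.
  have hf : forall i, `|f 0 i| <= 0.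
    move=> i; rewrite mxE.
    have -> : (i < nc)%N by apply: leq_trans (ltn_ord i) Hge.
    by rewrite subrr mulr0 mul0r normr0.
  have ub : forall x, qf S' (ETG A M nu1 nu2 Psh Psh *m x) <= ((0 : R)%:C) ^+ 2 * qf S' x.
    by rewrite rmorph0; exact: ub_diag uV hD dpos hE (lexx 0) hf.
  have le1 : opnorm S' (ETG A M nu1 nu2 Psh Psh) <= 0.
    exact: opnorm_le hS' n0 (lexx 0) (fun x _ => ub x).
  have ge : forall P : 'M[R[i]]_(n, nc), 0 <= opnorm S' (ETG A M nu1 nu2 P P).
    move=> P; have [x x0] := nonzero_vec R n0.
    apply: (opnorm_ge hS' (bounded_all _ hS' uV hD dpos) (lexx 0) x0).
    by rewrite rmorph0 expr0n mul0r qf_ge0.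
  split; first by move=> P; exact: le_trans le1 (ge P).
  by move=> Hlt; exfalso; move: Hlt; rewrite ltnNge Hge.
have [kA1 kA2] := key A _ hA hDA dApos.
have [kM1 kM2] := key M _ hM hDM dMpos.
split; first exact: uG.
- by move=> P _; exact: kA1.
- by move=> P _; exact: kM1.
- move=> Hlt; move: (kA2 Hlt) (kM2 Hlt); rewrite /mu [_ 0 (Ordinal Hlt)]mxE => e1 e2; split; [exact: e1 | exact: e2].
Qed.
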